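(* Let $f:[0,1]\to\mathbb{R}$ be a piecewise $C^1$, concave, non-negative function, let $a=\min\{\tau\in[0,1]: f(\tau)=\max_{[0,1]}f\}$, and assume $a>0$. Let $h>0$ and let $\gamma$ be the oriented curve $t\mapsto (y_1(t),y_2(t))=(1-t,\,f(1-t))$, $1-a\le t\le 1$ (running along the graph of $f$ from $(a,f(a))$ to $(0,f(0))$). Then for every $x_1\in[a/2,a]$, $$\int_\gamma\frac{y_1-x_1}{\left((y_1-x_1)^2+y_2^2+h^2\right)^{5/2}}\,dy_2>0,$$ equivalently $\int_0^a\frac{(t-x_1)f'(t)}{\left((t-x_1)^2+f(t)^2+h^2\right)^{5/2}}\,dt<0$. *)

(* Defs.v *)
From Stdlib Require Import Reals Lra.
Open Scope R_scope.

Definition concave_on01 (f : R -> R) : Prop :=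
  forall x y l, 0 <= x <= 1 -> 0 <= y <= 1 -> 0 <= l <= 1 ->
    l * f x + (1 - l) * f y <= f (l * x + (1 - l) * y).

(* f is piecewise C^1 on [0,1] with (almost-everywhere) derivative fp:
   there is a partition 0 = p 0 < p 1 < ... < p n = 1 such that on each
   closed piece [p i, p (i+1)] f is continuous, and on the open piece f is
   differentiable with derivative fp, which agrees there with a function g
   continuous on the closed piece (i.e. f' extends continuously to the
   closed piece, so f is C^1 on each closed piece). *)
Definition piecewise_C1_01 (f fp : R -> R) : Prop :=
  exists (n : nat) (p : nat -> R),
    p 0%nat = 0 /\ p n = 1 /\
    (forall i, (i < n)%nat -> p i < p (S i)) /\
    (forall i, (i < n)%nat ->
       (forall x, p i <= x <= p (S i) ->
          limit1_in f (fun y => p i <= y <= p (S i)) (f x) x) /\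
       (exists g : R -> R,
          (forall x, p i <= x <= p (S i) ->
             limit1_in g (fun y => p i <= y <= p (S i)) (g x) x) /\
          (forall x, p i < x < p (S i) ->
             derivable_pt_lim f x (fp x) /\ fp x = g x))).

Definition integrand (f fp : R -> R) (h x1 : R) (t : R) : R :=
  (t - x1) * fp t / Rpower ((t - x1) ^ 2 + (f t) ^ 2 + h ^ 2) (5 / 2).

(* Main.v *)
Require Import Defs.
From Stdlib Require Import Reals.
From Stdlib Require Import Lra Lia List RList Ranalysis RiemannInt_SF RiemannInt Classical ClassicalEpsilon.
Open Scope R_scope.

Lemma zero_open_stepfun (f : R->R) a b : a <= b -> (forall x, a<x<b -> f x = 0) -> IsStepFun f a b.
Proof.
  intros Hab Hf. exists (a::b::nil). exists (0::nil).
  unfold adapted_couple; repeat split.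
  - unfold ordered_Rlist; intros i Hi; simpl in Hi. destruct i; [simpl; lra| lia].
  - simpl; unfold Rmin; destruct (Rle_dec a b); lra.
  - simpl; unfold Rmax; destruct (Rle_dec a b); lra.
  - intros i Hi; simpl in Hi. destruct i; [|lia].
    unfold constant_D_eq, open_interval; simpl; intros; apply Hf; auto.
Qed.

Lemma RI_zero_open f a b : a<=b -> (forall x, a<x<b -> f x = 0) -> Riemann_integrable f a b.
Proof.
  intros Hab Hf eps.
  exists (mkStepFun (zero_open_stepfun f a b Hab Hf)).
  exists (mkStepFun (StepFun_P4 a b 0)). split.
  - intros; simpl; unfold fct_cte; rewrite Rminus_diag, Rabs_R0; lra.
  - rewrite StepFun_P18, Rmult_0_l, Rabs_R0. apply cond_pos.
Qed.

Lemma RI_open_eq f g a b : a <= b -> (forall x, a<x<b -> f x = g x) ->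
  Riemann_integrable g a b -> Riemann_integrable f a b.
Proof.
  intros Hab Hfg Hg.
  assert (X : Riemann_integrable (fun x => g x + 1 * (f x - g x)) a b).
  { apply RiemannInt_P10; auto. apply RI_zero_open; auto. intros x Hx; rewrite Hfg; auto; ring. }
  apply Riemann_integrable_ext with (2:=X). intros; ring.
Qed.

Lemma Rabs_le_inv' x b : Rabs x <= b -> -b <= x <= b.
Proof. unfold Rabs; destruct (Rcase_abs x); lra. Qed.

Definition clamp (c d x : R) := Rmax c (Rmin d x).
Lemma clamp_in c d x : c <= d -> c <= clamp c d x <= d.
Proof. unfold clamp, Rmax, Rmin; intros; destruct (Rle_dec d x); destruct (Rle_dec c _); lra. Qed.
Lemma clamp_id c d x : c <= x <= d -> clamp c d x = x.
Proof. unfold clamp, Rmax, Rmin; intros; destruct (Rle_dec d x); destruct (Rle_dec c _); lra. Qed.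
Lemma clamp_lip c d x y : c <= d -> x <= y -> 0 <= clamp c d y - clamp c d x <= y - x.
Proof. unfold clamp, Rmax, Rmin; intros; destruct (Rle_dec d x); destruct (Rle_dec d y);
  repeat match goal with |- context [Rle_dec ?u ?v] => destruct (Rle_dec u v) end; lra. Qed.

Lemma RInt_eq_bounds phi a b c (pr1: Riemann_integrable phi a b) (pr2: Riemann_integrable phi a c) :
  b = c -> RiemannInt pr1 = RiemannInt pr2.
Proof. intros; subst; apply RiemannInt_P5. Qed.

Definition Prim phi a (Ha : 0<=a) (pr: Riemann_integrable phi 0 a) x :=
  RiemannInt (RiemannInt_P22 pr (clamp_in 0 a x Ha)).

Lemma Prim_diff phi a Ha pr x y (pr' : Riemann_integrable phi x y) :
  0 <= x -> x <= y -> y <= a -> Prim phi a Ha pr y - Prim phi a Ha pr x = RiemannInt pr'.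
Proof.
  intros H1 H2 H3. unfold Prim.
  assert (p1 : Riemann_integrable phi 0 x) by (apply RiemannInt_P22 with a; auto; lra).
  assert (p3 : Riemann_integrable phi 0 y) by (apply RiemannInt_P22 with a; auto; lra).
  rewrite (RInt_eq_bounds _ _ _ _ _ p1 (clamp_id 0 a x ltac:(lra))).
  rewrite (RInt_eq_bounds _ _ _ _ _ p3 (clamp_id 0 a y ltac:(lra))).
  rewrite <- (RiemannInt_P25 p1 pr' p3); auto. ring.
Qed.

Lemma Prim_clamp phi a Ha pr x : Prim phi a Ha pr x = Prim phi a Ha pr (clamp 0 a x).
Proof. unfold Prim. apply RInt_eq_bounds. symmetry; apply clamp_id; apply clamp_in; auto. Qed.

Lemma Prim_lip phi a Ha pr M : 0 <= M -> (forall t, 0<t<a -> Rabs (phi t) <= M) ->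
  forall x y, Rabs (Prim phi a Ha pr y - Prim phi a Ha pr x) <= M * Rabs (y - x).
Proof.
  intros HM Hb.
  assert (K : forall x y, x <= y -> Rabs (Prim phi a Ha pr y - Prim phi a Ha pr x) <= M * Rabs (y - x)).
  { intros x y Hxy. rewrite (Prim_clamp _ _ _ _ x), (Prim_clamp _ _ _ _ y).
    destruct (clamp_in 0 a x Ha); destruct (clamp_in 0 a y Ha).
    pose proof (clamp_lip 0 a x y Ha Hxy).
    assert (pr' : Riemann_integrable phi (clamp 0 a x) (clamp 0 a y)).
    { apply RiemannInt_P23 with 0; [apply RiemannInt_P22 with a|]; auto; lra. }
    rewrite (Prim_diff _ _ _ _ _ _ pr'); try lra.
    destruct (RiemannInt_const_bound (l:=-M) (u:=M) pr') as [L U]; try lra.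
    { intros t Ht. pose proof (Hb t ltac:(lra)) as Hbt. apply Rabs_le_inv' in Hbt. lra. }
    rewrite (Rabs_right (y - x)) by lra. apply Rabs_le. split; nra. }
  intros x y. destruct (Rle_dec x y). auto.
  rewrite <- Rabs_Ropp, (Rabs_minus_sym y x). replace (- _) with (Prim phi a Ha pr x - Prim phi a Ha pr y) by ring.
  apply K; lra.
Qed.

Lemma lip_cont G M : 0<=M -> (forall x y, Rabs(G y - G x) <= M * Rabs(y-x)) -> forall x, continuity_pt G x.
Proof.
  intros HM HG x. unfold continuity_pt, continue_in, limit1_in, limit_in. intros eps He.
  exists (eps/(M+1)). split. apply Rdiv_lt_0_compat; lra.
  intros y [_ Hy]. simpl in *. unfold R_dist in *.
  eapply Rle_lt_trans. apply HG.
  apply Rle_lt_trans with (M * (eps/(M+1))). apply Rmult_le_compat_l; lra.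
  apply Rmult_lt_reg_r with (M+1). lra. field_simplify; nra.
Qed.

Lemma Prim_deriv phi a Ha pr x : 0 < x < a -> continuity_pt phi x ->
  derivable_pt_lim (Prim phi a Ha pr) x (phi x).
Proof.
  intros Hx Hc eps He.
  destruct (Hc (eps/2) ltac:(lra)) as [alp [Halp Hal]].
  assert (Hd : 0 < Rmin alp (Rmin x (a - x))).
  { repeat apply Rmin_pos; lra. }
  exists (mkposreal _ Hd). intros h Hh0 Hh. simpl in Hh.
  assert (Hm1 := Rmin_l alp (Rmin x (a-x))). assert (Hm2 := Rmin_r alp (Rmin x (a-x))).
  assert (Hm3 := Rmin_l x (a-x)). assert (Hm4 := Rmin_r x (a-x)).
  assert (Hbd : forall t, Rabs (t - x) < alp -> phi x - eps/2 <= phi t <= phi x + eps/2).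
  { intros t Ht. destruct (Req_dec t x). subst; lra.
    assert (K := Hal t). simpl in K. unfold R_dist, D_x, no_cond in K.
    assert (K2 : Rabs (phi t - phi x) < eps/2) by (apply K; split; auto).
    apply Rabs_def2 in K2. lra. }
  assert (Key : Rabs (Prim phi a Ha pr (x+h) - Prim phi a Ha pr x - phi x * h) <= eps/2 * Rabs h).
  { destruct (Rle_dec 0 h).
    - assert (h > 0) by (destruct r; auto; congruence).
      rewrite Rabs_right in Hh by lra.
      assert (pr' : Riemann_integrable phi x (x+h)).
      { apply RiemannInt_P23 with 0; [apply RiemannInt_P22 with a|]; auto; lra. }
      rewrite (Prim_diff _ _ _ _ _ _ pr') by lra.
      destruct (RiemannInt_const_bound (l:=phi x - eps/2) (u:= phi x + eps/2) pr') as [L U]; try lra.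
      { intros t Ht. apply Hbd. rewrite Rabs_right; lra. }
      rewrite (Rabs_right h) by lra. apply Rabs_le. split; nra.
    - rewrite Rabs_left in Hh by lra.
      assert (pr' : Riemann_integrable phi (x+h) x).
      { apply RiemannInt_P23 with 0; [apply RiemannInt_P22 with a|]; auto; lra. }
      replace (Prim phi a Ha pr (x+h) - Prim phi a Ha pr x - phi x * h)
        with (-((Prim phi a Ha pr x - Prim phi a Ha pr (x+h)) + phi x * h)) by ring.
      rewrite Rabs_Ropp.
      rewrite (Prim_diff _ _ _ _ _ _ pr') by lra.
      destruct (RiemannInt_const_bound (l:=phi x - eps/2) (u:= phi x + eps/2) pr') as [L U]; try lra.
      { intros t Ht. apply Hbd. rewrite Rabs_left; lra. }
      rewrite (Rabs_left h) by lra. apply Rabs_le. split; nra. }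
  replace ((Prim phi a Ha pr (x + h) - Prim phi a Ha pr x) / h - phi x)
    with ((Prim phi a Ha pr (x+h) - Prim phi a Ha pr x - phi x * h) / h) by (field; auto).
  unfold Rdiv. rewrite Rabs_mult, Rabs_inv.
  assert (0 < Rabs h) by (apply Rabs_pos_lt; auto).
  apply Rle_lt_trans with (eps/2 * Rabs h * / Rabs h).
  apply Rmult_le_compat_r; auto. left; apply Rinv_0_lt_compat; auto.
  field_simplify; lra.
Qed.

Lemma nin (s:R) : ~ In s nil. Proof. simpl; auto. Qed.

Lemma strict_decr G D (L : list R) : forall c d, c < d ->
  (forall s, c<=s<=d -> continuity_pt G s) ->
  (forall s, c<s<d -> ~ In s L -> derivable_pt_lim G s (D s) /\ D s < 0) -> G d < G c.
Proof.
  induction L as [|q L IH]; intros c d Hcd Hc Hd.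
  - assert (pr1 : forall s, c < s < d -> derivable_pt G s).
    { intros s Hs. exists (D s). apply (Hd s Hs (nin s)). }
    assert (pr2 : forall s, c < s < d -> derivable_pt id s).
    { intros; apply derivable_pt_id. }
    destruct (MVT G id c d pr1 pr2 Hcd Hc) as [xi [P E]].
    { intros; apply derivable_continuous_pt, derivable_pt_id. }
    assert (E3 : derive_pt id xi (pr2 xi P) = 1).
    { apply derive_pt_eq_0. apply derivable_pt_lim_id. }
    rewrite E3 in E. unfold id in E.
    assert (E2 : derive_pt G xi (pr1 xi P) = D xi).
    { apply derive_pt_eq_0. apply (Hd xi P (nin xi)). }
    rewrite E2 in E. destruct (Hd xi P (nin xi)). nra.
  - destruct (classic (c < q < d)) as [Hq|Hq].
    + apply Rlt_trans with (G q).
      * apply IH; try lra. intros; apply Hc; lra.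
        intros s Hs Hn; apply Hd; [lra|]. intros [E|E]; [lra|auto].
      * apply IH; try lra. intros; apply Hc; lra.
        intros s Hs Hn; apply Hd; [lra|]. intros [E|E]; [lra|auto].
    + apply IH; auto. intros s Hs Hn; apply Hd; auto. intros [E|E]; [subst; auto|auto].
Qed.

Lemma conc3 f u w v : concave_on01 f -> 0 <= u -> u < w -> w < v -> v <= 1 ->
  (v-w) * f u + (w-u) * f v <= (v-u) * f w.
Proof.
  intros Hc H1 H2 H3 H4.
  set (l := (v-w)/(v-u)).
  assert (Hl : 0 <= l <= 1).
  { unfold l; split. unfold Rdiv; apply Rmult_le_pos; [lra| left; apply Rinv_0_lt_compat; lra].
    apply Rmult_le_reg_r with (v-u). lra. field_simplify; lra. }
  pose proof (Hc u v l ltac:(lra) ltac:(lra) Hl) as K.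
  replace (l*u + (1-l)*v) with w in K by (unfold l; field; lra).
  apply Rmult_le_compat_l with (r := v-u) in K; [|lra].
  replace ((v-u) * (l * f u + (1-l) * f v)) with ((v-w) * f u + (w-u) * f v) in K
    by (unfold l; field; lra). lra.
Qed.

Lemma right_bound f d u v : concave_on01 f -> derivable_pt_lim f u d ->
  0 <= u -> u < v -> v <= 1 -> f v - f u <= d * (v - u).
Proof.
  intros Hc Hd H1 H2 H3.
  destruct (Rle_dec (f v - f u) (d * (v-u))) as [|Hn]; auto. exfalso.
  set (S := (f v - f u)/(v-u)).
  assert (HS : d < S) by (unfold S; apply Rmult_lt_reg_r with (v-u); [lra|]; field_simplify; lra).
  destruct (Hd (S - d) ltac:(lra)) as [del Hdel].
  set (k := Rmin (del/2) ((v-u)/2)).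
  assert (Hk : 0 < k) by (unfold k; apply Rmin_pos; [pose proof (cond_pos del)|]; lra).
  assert (Hk1 : k <= del/2) by apply Rmin_l. assert (Hk2 : k <= (v-u)/2) by apply Rmin_r.
  pose proof (cond_pos del).
  specialize (Hdel k ltac:(lra) ltac:(rewrite Rabs_right; lra)).
  pose proof (conc3 f u (u+k) v Hc H1 ltac:(lra) ltac:(lra) H3) as K.
  apply Rabs_def2 in Hdel. destruct Hdel as [Hd1 _].
  assert (E : (f (u+k) - f u)/k < S) by lra.
  apply Rmult_lt_compat_r with (r:=k) in E; [|lra].
  replace ((f (u+k) - f u)/k * k) with (f (u+k) - f u) in E by (field; lra).
  unfold S in E.
  apply Rmult_lt_compat_r with (r:=v-u) in E; [|lra].
  replace ((f v - f u) / (v - u) * k * (v - u)) with ((f v - f u) * k) in E by (field; lra).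
  nra.
Qed.

Lemma left_bound f d u v : concave_on01 f -> derivable_pt_lim f v d ->
  0 <= u -> u < v -> v <= 1 -> d * (v - u) <= f v - f u.
Proof.
  intros Hc Hd H1 H2 H3.
  destruct (Rle_dec (d * (v-u)) (f v - f u)) as [|Hn]; auto. exfalso.
  set (S := (f v - f u)/(v-u)).
  assert (HS : S < d) by (unfold S; apply Rmult_lt_reg_r with (v-u); [lra|]; field_simplify; lra).
  destruct (Hd (d - S) ltac:(lra)) as [del Hdel].
  set (k := Rmin (del/2) ((v-u)/2)).
  assert (Hk : 0 < k) by (unfold k; apply Rmin_pos; [pose proof (cond_pos del)|]; lra).
  assert (Hk1 : k <= del/2) by apply Rmin_l. assert (Hk2 : k <= (v-u)/2) by apply Rmin_r.
  pose proof (cond_pos del).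
  specialize (Hdel (-k) ltac:(lra) ltac:(rewrite Rabs_left; lra)).
  pose proof (conc3 f u (v-k) v Hc H1 ltac:(lra) ltac:(lra) H3) as K.
  apply Rabs_def2 in Hdel. destruct Hdel as [_ Hd1].
  replace (v + - k) with (v - k) in Hd1 by ring.
  assert (E : S < (f (v-k) - f v)/(-k)) by lra.
  apply Rmult_lt_compat_r with (r:=k) in E; [|lra].
  replace ((f (v-k) - f v)/(-k) * k) with (f v - f (v-k)) in E by (field; lra).
  unfold S in E.
  apply Rmult_lt_compat_r with (r:=v-u) in E; [|lra].
  replace ((f v - f u) / (v - u) * k * (v - u)) with ((f v - f u) * k) in E by (field; lra).
  nra.
Qed.

Lemma f_lt_fa f a u : concave_on01 f -> 0 <= a <= 1 ->
  (forall t, 0 <= t <= 1 -> f t <= f a) ->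
  (forall t, 0 <= t <= 1 -> f t = f a -> a <= t) -> 0 <= u < a -> f u < f a.
Proof.
  intros Hc Ha Hmax Hmin Hu. destruct (Hmax u ltac:(lra)) as [|E]; auto.
  apply Hmin in E; lra.
Qed.

Lemma f_incr f a u w : concave_on01 f -> 0 <= a <= 1 ->
  (forall t, 0 <= t <= 1 -> f t <= f a) ->
  (forall t, 0 <= t <= 1 -> f t = f a -> a <= t) -> 0 <= u -> u < w -> w <= a -> f u < f w.
Proof.
  intros Hc Ha Hmax Hmin H1 H2 H3.
  pose proof (f_lt_fa f a u Hc Ha Hmax Hmin ltac:(lra)).
  destruct (Req_dec w a). subst; auto.
  pose proof (conc3 f u w a Hc H1 H2 ltac:(lra) ltac:(lra)). nra.
Qed.

Lemma p_mono (n : nat) (p : nat -> R) : (forall i, (i < n)%nat -> p i < p (S i)) ->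
  forall i j, (i <= j)%nat -> (j <= n)%nat -> p i <= p j.
Proof.
  intros Hp i j Hij. induction Hij; intros. lra.
  apply Rle_trans with (p m). apply IHHij; lia. left; apply Hp; lia.
Qed.

Lemma locate (n : nat) (p : nat -> R) t : p 0%nat = 0 -> p n = 1 ->
  (forall i, (i < n)%nat -> p i < p (S i)) -> 0 < t < 1 ->
  (forall i, (i <= n)%nat -> t <> p i) -> exists i, (i < n)%nat /\ p i < t < p (S i).
Proof.
  intros H0 Hn Hp Ht Hne.
  assert (K : forall k, (k <= n)%nat -> t < p k -> exists i, (i < k)%nat /\ p i < t < p (S i)).
  { induction k; intros Hk Htk. lra.
    destruct (Rlt_dec t (p k)).
    - destruct (IHk ltac:(lia) r) as [i [Hi1 Hi2]]. exists i; split; auto; lia.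
    - exists k; split; [lia|]. split; auto. assert (t <> p k) by (apply Hne; lia). lra. }
  destruct (K n ltac:(lia) ltac:(lra)) as [i [Hi1 Hi2]]. exists i; auto.
Qed.

Lemma in_Lp (n : nat) (p : nat -> R) t : (forall i, (i <= n)%nat -> t <> p i) -> ~ In t (map p (seq 0 (S n))).
Proof.
  intros H Hin. apply in_map_iff in Hin. destruct Hin as [i [E Hi]].
  apply in_seq in Hi. apply (H i); [lia| auto].
Qed.

Lemma cont_from_within (u w : R -> R) c d t : (forall y, c<y<d -> u y = w y) ->
  limit1_in w (fun y => c<=y<=d) (w t) t -> c<t<d -> continuity_pt u t.
Proof.
  intros Heq Hl Ht eps He.
  destruct (Hl eps He) as [alp [Ha Hal]].
  exists (Rmin alp (Rmin (t-c) (d-t))). split. repeat apply Rmin_pos; lra.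
  intros y [_ Hy]. simpl in *. unfold R_dist in *.
  assert (Hm1 := Rmin_l alp (Rmin (t-c) (d-t))). assert (Hm2 := Rmin_r alp (Rmin (t-c) (d-t))).
  assert (Hm3 := Rmin_l (t-c) (d-t)). assert (Hm4 := Rmin_r (t-c) (d-t)).
  apply Rabs_def2 in Hy.
  rewrite (Heq y) by lra. rewrite (Heq t) by lra.
  apply Hal. split. lra. apply Rabs_def1; lra.
Qed.

Lemma clamp_cont (u : R -> R) c d : c <= d ->
  (forall x, c<=x<=d -> limit1_in u (fun y => c<=y<=d) (u x) x) ->
  forall t, continuity_pt (fun y => u (clamp c d y)) t.
Proof.
  intros Hcd Hl t eps He.
  destruct (Hl (clamp c d t) (clamp_in c d t Hcd) eps He) as [alp [Ha Hal]].
  exists alp. split; auto. intros y [_ Hy]. simpl in *. unfold R_dist in *.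
  apply Hal. split. apply clamp_in; auto.
  destruct (Rle_dec t y).
  - pose proof (clamp_lip c d t y Hcd r). apply Rabs_def2 in Hy. apply Rabs_def1; lra.
  - pose proof (clamp_lip c d y t Hcd ltac:(lra)). apply Rabs_def2 in Hy. apply Rabs_def1; lra.
Qed.

Lemma sq_cont (u : R -> R) t : continuity_pt u t -> continuity_pt (fun y => u y ^ 2) t.
Proof.
  intros H. apply (continuity_pt_comp u (fun z => z ^ 2)); auto.
  apply derivable_continuous_pt, derivable_pt_pow.
Qed.

Lemma Rpow52_pos z : 0 < Rpower z (5/2).
Proof. unfold Rpower; apply exp_pos. Qed.

Lemma integrand_cont (f fp : R -> R) h x1 t : 0 < h ->
  continuity_pt f t -> continuity_pt fp t -> continuity_pt (integrand f fp h x1) t.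
Proof.
  intros Hh Hf Hfp. unfold integrand.
  assert (Hpos : 0 < (t - x1) ^ 2 + f t ^ 2 + h ^ 2) by (pose proof (pow2_ge_0 (t-x1)); pose proof (pow2_ge_0 (f t)); pose proof (pow_lt h 2 Hh); lra).
  apply (continuity_pt_div (fun t => (t - x1) * fp t) (fun t => Rpower ((t - x1) ^ 2 + f t ^ 2 + h ^ 2) (5/2))).
  - apply (continuity_pt_mult (fun t => t - x1) fp); auto.
    apply (continuity_pt_minus id (fct_cte x1)). apply derivable_continuous_pt, derivable_pt_id.
    apply continuity_pt_const; unfold constant; auto.
  - apply (continuity_pt_comp (fun t => (t - x1) ^ 2 + f t ^ 2 + h ^ 2) (fun z => Rpower z (5/2))).
    + apply (continuity_pt_plus (fun t => (t - x1) ^ 2 + f t ^ 2) (fct_cte (h^2))).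
      apply (continuity_pt_plus (fun t => (t - x1) ^ 2) (fun t => f t ^ 2)).
      apply (sq_cont (fun t => t - x1)).
      apply (continuity_pt_minus id (fct_cte x1)). apply derivable_continuous_pt, derivable_pt_id.
      apply continuity_pt_const; unfold constant; auto.
      apply sq_cont; auto.
      apply continuity_pt_const; unfold constant; auto.
    + apply derivable_continuous_pt. exists (5/2 * Rpower ((t - x1) ^ 2 + f t ^ 2 + h ^ 2) (5/2 - 1)).
      apply derivable_pt_lim_power; auto.
  - apply Rgt_not_eq, Rpow52_pos.
Qed.

Lemma notin_Lp (n : nat) (p : nat -> R) t : ~ In t (map p (seq 0 (S n))) -> forall i, (i <= n)%nat -> t <> p i.
Proof. intros H i Hi E. apply H. subst. apply in_map. apply in_seq. lia. Qed.

Lemma Rpow_lt x y : 0 < x -> x < y -> Rpower x (5/2) < Rpower y (5/2).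
Proof. intros; unfold Rpower; apply exp_increasing; apply Rmult_lt_compat_l; [lra|apply ln_increasing; auto]. Qed.

Lemma Rpow_le x y : 0 < x -> x <= y -> Rpower x (5/2) <= Rpower y (5/2).
Proof. intros H [E|E]. left; apply Rpow_lt; auto. subst; lra. Qed.

Fixpoint sabs (u : nat -> R) (k : nat) : R :=
  match k with O => Rabs (u O) | S k => sabs u k + Rabs (u (S k)) end.

Lemma sabs_pos u k : 0 <= sabs u k.
Proof. induction k; simpl. apply Rabs_pos. pose proof (Rabs_pos (u (S k))); lra. Qed.

Lemma sabs_ge u k i : (i <= k)%nat -> Rabs (u i) <= sabs u k.
Proof.
  induction k; intros Hi. replace i with O by lia. simpl; lra.
  simpl. destruct (Nat.eq_dec i (S k)). subst. pose proof (sabs_pos u k); lra.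
  pose proof (IHk ltac:(lia)). pose proof (Rabs_pos (u (S k))); lra.
Qed.

Lemma dpl_eq f x l l' : derivable_pt_lim f x l -> l = l' -> derivable_pt_lim f x l'.
Proof. intros; subst; auto. Qed.

Theorem lemma4p7 (f fp : R -> R) (a h : R)
  (Hpw : piecewise_C1_01 f fp)
  (Hconc : concave_on01 f)
  (Hnn : forall t, 0 <= t <= 1 -> 0 <= f t)
  (Ha01 : 0 <= a <= 1)
  (Hamax : forall t, 0 <= t <= 1 -> f t <= f a)
  (Hamin : forall t, 0 <= t <= 1 -> f t = f a -> a <= t)
  (Hapos : 0 < a)
  (Hh : 0 < h) :
  forall x1, a / 2 <= x1 <= a ->
    exists pr : Riemann_integrable (integrand f fp h x1) 0 a,
      RiemannInt pr < 0.
Proof.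
  intros x1 Hx1.
  destruct Hpw as [n [p [Hp0 [Hpn [Hpinc Hpc]]]]].
  set (phi := integrand f fp h x1).
  set (Lp := map p (seq 0 (S n))).
  assert (HA : forall t, 0 < t < 1 -> ~ In t Lp ->
            derivable_pt_lim f t (fp t) /\ continuity_pt phi t).
  { intros t Ht Hn.
    destruct (locate n p t Hp0 Hpn Hpinc Ht (notin_Lp n p t Hn)) as [i [Hi Hti]].
    destruct (Hpc i Hi) as [_ [g [Hg Hd]]].
    destruct (Hd t Hti) as [Hdt _]. split; auto.
    apply integrand_cont; auto.
    apply derivable_continuous_pt. exists (fp t); auto.
    apply (cont_from_within fp g (p i) (p (S i))); auto.
    intros y Hy; apply (Hd y Hy). apply Hg; lra. }
  assert (HBi : forall i, (i < n)%nat -> Riemann_integrable phi (p i) (p (S i))).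
  { intros i Hi. destruct (Hpc i Hi) as [Hfc Hex].
    destruct (constructive_indefinite_description _ Hex) as [g [Hg Hd]].
    pose proof (Hpinc i Hi).
    apply RI_open_eq with (g := integrand (fun y => f (clamp (p i) (p (S i)) y))
                                          (fun y => g (clamp (p i) (p (S i)) y)) h x1).
    lra.
    intros y Hy. unfold phi, integrand. rewrite clamp_id by lra.
    destruct (Hd y Hy) as [_ E]. rewrite E; auto.
    apply continuity_implies_RiemannInt. lra.
    intros y Hy. apply integrand_cont; auto; apply clamp_cont; auto; lra. }
  assert (HBk : forall k, (k <= n)%nat -> Riemann_integrable phi 0 (p k)).
  { induction k; intros Hk. rewrite Hp0. apply RiemannInt_P7.
    apply RiemannInt_P24 with (p k). apply IHk; lia. apply HBi; lia. }
  assert (pr1 : Riemann_integrable phi 0 1).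
  { rewrite <- Hpn. apply HBk; lia. }
  assert (pr : Riemann_integrable phi 0 a).
  { apply (RiemannInt_P22 pr1); lra. }
  exists pr.

  assert (Ha : 0 <= a) by lra.
  assert (HEmono : forall t1 t2, 0 <= t1 -> t1 < t2 -> t2 <= 1 ->
     derivable_pt_lim f t1 (fp t1) -> derivable_pt_lim f t2 (fp t2) -> fp t2 <= fp t1).
  { intros t1 t2 H1 H2 H3 D1 D2.
    pose proof (right_bound f (fp t1) t1 t2 Hconc D1 H1 H2 H3).
    pose proof (left_bound f (fp t2) t1 t2 Hconc D2 H1 H2 H3). nra. }
  assert (HEpos : forall t, 0 < t < a -> ~ In t Lp -> 0 < fp t).
  { intros t Ht Hn. destruct (HA t ltac:(lra) Hn) as [Hd _].
    pose proof (right_bound f (fp t) t a Hconc Hd ltac:(lra) ltac:(lra) ltac:(lra)).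
    pose proof (f_lt_fa f a t Hconc Ha01 Hamax Hamin ltac:(lra)). nra. }
  assert (Hn1 : (0 < n)%nat).
  { destruct n; [rewrite Hp0 in Hpn; lra | lia]. }
  destruct (Hpc 0%nat Hn1) as [_ [g0 [Hg0 Hd0]]].
  pose proof (Hpinc 0%nat Hn1) as Hp01. rewrite Hp0 in Hp01.
  destruct (Hg0 (p 0%nat) ltac:(rewrite Hp0; lra) 1 Rlt_0_1) as [del [Hdel Hdl]].
  set (t0 := Rmin del (p 1%nat) / 2).
  assert (Ht0 : 0 < t0 < p 1%nat).
  { unfold t0. pose proof (Rmin_l del (p 1%nat)). pose proof (Rmin_r del (p 1%nat)).
    assert (0 < Rmin del (p 1%nat)) by (apply Rmin_pos; lra). lra. }
  assert (Hdt0 : derivable_pt_lim f t0 (fp t0)).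
  { apply (Hd0 t0). rewrite Hp0; lra. }
  set (C := Rabs (g0 (p 0%nat)) + 1 + Rabs (fp t0)).
  assert (HC : forall t, 0 < t < a -> ~ In t Lp -> fp t <= C).
  { intros t Ht Hn. destruct (Rle_dec t t0).
    - destruct (Hd0 t ltac:(rewrite Hp0; lra)) as [_ E]. rewrite E.
      assert (K : R_dist (g0 t) (g0 (p 0%nat)) < 1).
      { apply Hdl. split. rewrite Hp0; lra. simpl; unfold R_dist; rewrite Hp0.
        rewrite Rminus_0_r, Rabs_right by lra. unfold t0 in r.
        pose proof (Rmin_l del (p 1%nat)). lra. }
      unfold R_dist in K. apply Rabs_def2 in K.
      pose proof (Rle_abs (g0 (p 0%nat))). pose proof (Rabs_pos (fp t0)). unfold C; lra.
    - destruct (HA t ltac:(lra) Hn) as [Hd _].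
      pose proof (HEmono t0 t ltac:(lra) ltac:(lra) ltac:(lra) Hdt0 Hd).
      pose proof (Rle_abs (fp t0)). pose proof (Rabs_pos (g0 (p 0%nat))). unfold C; lra. }
  assert (HC0 : 0 <= C) by (unfold C; pose proof (Rabs_pos (g0 (p 0%nat))); pose proof (Rabs_pos (fp t0)); lra).
  set (B := sabs (fun i => fp (p i)) n + C).
  assert (HB : forall t, 0 < t < a -> Rabs (fp t) <= B).
  { intros t Ht. destruct (classic (In t Lp)) as [Hin|Hn].
    - unfold Lp in Hin. apply in_map_iff in Hin. destruct Hin as [i [E Hi]].
      apply in_seq in Hi. rewrite <- E.
      pose proof (sabs_ge (fun i => fp (p i)) n i ltac:(lia)). simpl in *. unfold B; lra.
    - pose proof (HEpos t Ht Hn). pose proof (HC t Ht Hn).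
      rewrite Rabs_right by lra. unfold B; pose proof (sabs_pos (fun i => fp (p i)) n); lra. }
  assert (HB0 : 0 <= B) by (unfold B; pose proof (sabs_pos (fun i => fp (p i)) n); lra).
  set (R0 := Rpower (h^2) (5/2)).
  assert (HR0 : 0 < R0) by apply Rpow52_pos.
  set (M := B / R0).
  assert (HM0 : 0 <= M).
  { unfold M, Rdiv. apply Rmult_le_pos; auto. left; apply Rinv_0_lt_compat; auto. }
  assert (HM : forall t, 0 < t < a -> Rabs (phi t) <= M).
  { intros t Ht. unfold phi, integrand.
    set (F := (t - x1) ^ 2 + f t ^ 2 + h ^ 2).
    assert (Hh2 : 0 < h^2) by (apply pow_lt; auto).
    assert (HF : h^2 <= F) by (unfold F; pose proof (pow2_ge_0 (t-x1)); pose proof (pow2_ge_0 (f t)); lra).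
    pose proof (Rpow_le (h^2) F Hh2 HF) as HRF. fold R0 in HRF.
    pose proof (Rpow52_pos F).
    unfold Rdiv. rewrite Rabs_mult, Rabs_mult, Rabs_inv, (Rabs_right (Rpower F _)) by lra.
    unfold M, Rdiv.
    assert (Hx : Rabs (t - x1) <= 1) by (apply Rabs_le; lra).
    pose proof (HB t Ht).
    apply Rmult_le_compat.
    - apply Rmult_le_pos; apply Rabs_pos.
    - left; apply Rinv_0_lt_compat; lra.
    - replace B with (1 * B) by ring. apply Rmult_le_compat; auto; apply Rabs_pos.
    - apply Rinv_le_contravar; auto. }
  set (P := Prim phi a Ha pr).
  assert (HPc : forall x, continuity_pt P x).
  { apply (lip_cont P M HM0). apply Prim_lip; auto. }
  assert (HPd : forall t, 0 < t < a -> ~ In t Lp -> derivable_pt_lim P t (phi t)).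
  { intros t Ht Hn. apply Prim_deriv; auto. apply (HA t ltac:(lra) Hn). }
  assert (HI : RiemannInt pr = P a - P 0).
  { unfold P. rewrite (Prim_diff phi a Ha pr 0 a pr); lra. }
  assert (HPB : P (2*x1 - a) <= P 0 /\ (0 < 2*x1 - a -> P (2*x1 - a) < P 0)).
  { destruct (Rlt_dec 0 (2*x1-a)) as [Hlt|Hge].
    - assert (K : P (2*x1 - a) < P 0).
      { apply (strict_decr P phi Lp 0 (2*x1-a) Hlt).
        intros; apply HPc.
        intros s Hs Hn. split. apply HPd; auto; lra.
        pose proof (HEpos s ltac:(lra) Hn).
        unfold phi, integrand.
        pose proof (Rpow52_pos ((s - x1) ^ 2 + f s ^ 2 + h ^ 2)).
        assert (0 < / Rpower ((s - x1) ^ 2 + f s ^ 2 + h ^ 2) (5/2)) by (apply Rinv_0_lt_compat; auto).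
        unfold Rdiv. assert ((s - x1) * fp s < 0) by nra. nra. }
      split; [lra| auto].
    - replace (2*x1 - a) with 0 by lra. split; lra. }
  assert (HPA : P a - P (2*x1 - a) <= 0 /\ (x1 < a -> P a - P (2*x1 - a) < 0)).
  { destruct (Rlt_dec x1 a) as [Hlt|Hge].
    - set (G := fun s => P (x1 + s) - P (x1 - s)).
      set (L := map (fun q => q - x1) Lp ++ map (fun q => x1 - q) Lp).
      assert (K : G (a - x1) < G 0).
      { apply (strict_decr G (fun s => phi (x1 + s) + phi (x1 - s)) L 0 (a - x1)); [lra| |].
        - intros s Hs. unfold G.
          apply (continuity_pt_minus (fun s => P (x1 + s)) (fun s => P (x1 - s))).
          + apply (continuity_pt_comp (fun s => x1 + s) P); auto.
            apply (continuity_pt_plus (fct_cte x1) id).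
            apply continuity_pt_const; unfold constant; auto.
            apply derivable_continuous_pt, derivable_pt_id.
          + apply (continuity_pt_comp (fun s => x1 - s) P); auto.
            apply (continuity_pt_minus (fct_cte x1) id).
            apply continuity_pt_const; unfold constant; auto.
            apply derivable_continuous_pt, derivable_pt_id.
        - intros s Hs Hn.
          assert (Hn2 : ~ In (x1 + s) Lp).
          { intros Hin. apply Hn. unfold L. apply in_or_app. left.
            pose proof (in_map (fun q => q - x1) _ _ Hin) as K. simpl in K. replace (x1 + s - x1) with s in K by ring. exact K. }
          assert (Hn1' : ~ In (x1 - s) Lp).
          { intros Hin. apply Hn. unfold L. apply in_or_app. right.
            pose proof (in_map (fun q => x1 - q) _ _ Hin) as K. simpl in K. replace (x1 - (x1 - s)) with s in K by ring. exact K. }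
          split.
          + apply dpl_eq with (phi (x1 + s) * 1 - phi (x1 - s) * (0 - 1)); [|ring].
            apply (derivable_pt_lim_minus (fun s => P (x1 + s)) (fun s => P (x1 - s))).
            * apply (derivable_pt_lim_comp (fun s => x1 + s) P).
              apply dpl_eq with (0 + 1); [|ring].
              apply (derivable_pt_lim_plus (fct_cte x1) id).
              apply derivable_pt_lim_const. apply derivable_pt_lim_id.
              apply HPd; auto; lra.
            * apply (derivable_pt_lim_comp (fun s => x1 - s) P).
              apply (derivable_pt_lim_minus (fct_cte x1) id).
              apply derivable_pt_lim_const. apply derivable_pt_lim_id.
              apply HPd; auto; lra.
          + set (t1 := x1 - s). set (t2 := x1 + s).
            pose proof (HEpos t2 ltac:(unfold t2; lra) Hn2) as Hf2.
            destruct (HA t1 ltac:(unfold t1; lra) Hn1') as [D1 _].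
            destruct (HA t2 ltac:(unfold t2; lra) Hn2) as [D2 _].
            pose proof (HEmono t1 t2 ltac:(unfold t1; lra) ltac:(unfold t1, t2; lra) ltac:(unfold t2; lra) D1 D2) as Hm.
            pose proof (f_incr f a t1 t2 Hconc Ha01 Hamax Hamin ltac:(unfold t1; lra) ltac:(unfold t1, t2; lra) ltac:(unfold t2; lra)) as Hfi.
            pose proof (Hnn t1 ltac:(unfold t1; lra)) as Hn0.
            unfold phi, integrand.
            replace (t1 - x1) with (-s) by (unfold t1; ring).
            replace (t2 - x1) with s by (unfold t2; ring).
            set (F1 := (-s) ^ 2 + f t1 ^ 2 + h ^ 2). set (F2 := s ^ 2 + f t2 ^ 2 + h ^ 2).
            assert (HF1 : 0 < F1) by (unfold F1; pose proof (pow2_ge_0 (-s)); pose proof (pow2_ge_0 (f t1)); pose proof (pow_lt h 2 Hh); lra).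
            assert (HF12 : F1 < F2) by (unfold F1, F2; simpl; nra).
            pose proof (Rpow_lt F1 F2 HF1 HF12) as HR.
            pose proof (Rpow52_pos F1) as HR1.
            assert (Hr : / Rpower F2 (5/2) < / Rpower F1 (5/2)) by (apply Rinv_lt_contravar; nra).
            assert (Hr2 : 0 < / Rpower F2 (5/2)) by (apply Rinv_0_lt_compat; lra).
            unfold Rdiv.
            assert (Hsf : 0 < s * fp t2) by nra.
            assert (E1 : s * fp t2 * / Rpower F2 (5/2) < s * fp t2 * / Rpower F1 (5/2)) by (apply Rmult_lt_compat_l; auto).
            assert (E2 : s * fp t2 * / Rpower F1 (5/2) <= s * fp t1 * / Rpower F1 (5/2)).
            { apply Rmult_le_compat_r; [lra|]. apply Rmult_le_compat_l; lra. }
            replace (- s * fp t1 * / Rpower F1 (5 / 2)) with (- (s * fp t1 * / Rpower F1 (5/2))) by ring.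
            lra. }
      unfold G in K. replace (x1 + (a - x1)) with a in K by ring.
      replace (x1 - (a - x1)) with (2*x1 - a) in K by ring.
      replace (x1 + 0) with x1 in K by ring. replace (x1 - 0) with x1 in K by ring.
      split; intros; lra.
    - replace (2*x1 - a) with a by lra. split; intros; lra. }
  rewrite HI. destruct HPB as [B1 B2]. destruct HPA as [A1 A2].
  destruct (Rlt_dec x1 a). specialize (A2 r). lra.
  assert (0 < 2*x1 - a) by lra. specialize (B2 H). lra.
Qed.
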